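(* Let $W\in\mathcal{W}(St^{\chi},\psi)^J$, let $\bar{k}\in\mathbb{Z}^n$, $d=\varpi^{\bar{k}}$ and $w\in\mathbf{W}$. Then $W(dw)=0$ unless $\bar{k}$ is $w$-dominant, i.e. unless for all $\alpha\in\Delta$ we have $\langle\alpha,\bar{k}\rangle\ge 0$ if $w^{-1}\alpha\in\Phi^+$ and $\langle\alpha,\bar{k}\rangle\ge -1$ if $w^{-1}\alpha\in\Phi^-$.
   Context: $F$ is a non-archimedean local field with ring of integers $\mathcal{O}$, maximal ideal $\mathfrak{p}=\varpi\mathcal{O}$. $G=GL_n(F)$, $B$ upper triangular Borel, $N$ upper triangular unipotent matrices, $K=GL_n(\mathcal{O})$, $J$ the Iwahori subgroup (elements of $K$ whose reduction mod $\mathfrak{p}$ is upper triangular). $\varpi^{\bar{k}}=\mathrm{diag}(\varpi^{k_1},\dots,\varpi^{k_n})$. $\mathbf{W}$ is the Weyl group of permutation matrices. Roots $\alpha_{i,j}(\mathrm{diag}(t))=t_i/t_j$, $\Phi^+=\{\alpha_{i,j}:i<j\}$, $\Phi^-=\{\alpha_{i,j}:i>j\}$, $\Delta=\{\alpha_{i,i+1}\}$, $(w\alpha)(t)=\alpha(w^{-1}tw)$, $\langle\alpha_{i,j},\bar{k}\rangle=k_i-k_j$. $\delta_B(\mathrm{diag}(t))=\prod|t_i|^{n+1-2i}$. $\tau$ unramified character of $F^*$ with $\tau^n=1$, $\chi=\tau\circ\det$; $St^{\chi}$ is the unique irreducible quotient of $I(\chi\delta_B^{-1/2})$, $I(\chi)=\mathrm{Ind}_B^G(\delta_B^{1/2}\chi)$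 (normalized induction). $\psi$ is an unramified additive character of $F$ (trivial on $\mathcal{O}$, nontrivial on $\mathfrak{p}^{-1}$), extended to $N$ by $\psi(n)=\psi(\sum_i n_{i,i+1})$; $\mathcal{W}(St^{\chi},\psi)$ is the Whittaker model (functions with $W(ng)=\psi(n)W(g)$, $G$ acting by right translation) and the superscript $J$ denotes right $J$-invariant functions. *)

(* Defs.v *)
From HB Require Import structures.
From mathcomp Require Import all_boot all_order all_algebra all_fingroup.
From mathcomp Require Import reals complex.
Set Implicit Arguments. Unset Strict Implicit. Unset Printing Implicit Defensive.
Import Order.TTheory GRing.Theory Num.Theory.
Local Open Scope ring_scope.

Section LocalFieldDefs.
Variables (F : fieldType) (v : F -> int) (pi : F).

(* x ∈ p^m  (x = 0 or v(x) >= m); the value of v at 0 is irrelevant *)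
Definition inP (m : int) (x : F) : bool := (x == 0) || (m <= v x).
Definition inO (x : F) : bool := inP 0 x.

Definition nonarch_local_field (q : nat) : Prop :=
  [/\ (forall x y, x != 0 -> y != 0 -> v (x * y) = v x + v y),
      (forall x y, x != 0 -> y != 0 -> x + y != 0 -> Num.min (v x) (v y) <= v (x + y)),
      pi != 0 /\ v pi = 1,
      (* residue field O/p has exactly q elements, q > 1 *)
      (1 < q)%N /\ exists s : seq F, [/\ size s = q, all inO s,
          (forall i j, (i < q)%N -> (j < q)%N -> inP 1 (nth 0 s i - nth 0 s j) -> i = j)
        & forall x, inO x -> exists2 r, r \in s & inP 1 (x - r)] &
      forall u : nat -> F,
        (forall m : int, exists N, forall i j, (N <= i)%N -> (N <= j)%N -> inP m (u i - u j)) ->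
        exists l, forall m : int, exists N, forall i, (N <= i)%N -> inP m (u i - l)].
End LocalFieldDefs.

Section GroupDefs.
Variables (F : fieldType) (v : F -> int) (n : nat).
Local Notation M := 'M[F]_n.

Definition inGL (g : M) : bool := g \in unitmx.
Definition inB (b : M) : Prop := inGL b /\ forall i j : 'I_n, (j < i)%N -> b i j = 0.
Definition inN (u : M) : Prop :=
  (forall i j : 'I_n, (j < i)%N -> u i j = 0) /\ (forall i : 'I_n, u i i = 1).
Definition inK (k : M) : Prop :=
  (forall i j, inO v (k i j)) /\ \det k != 0 /\ v (\det k) = 0.
Definition inJ (k : M) : Prop := inK k /\ forall i j : 'I_n, (j < i)%N -> inP v 1 (k i j).
Definition inKm (m : nat) (k : M) : Prop := forall i j, inP v m%:Z ((k - 1%:M) i j).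

Definition varpi_diag (pi : F) (k : 'I_n -> int) : M := diag_mx (\row_i pi ^ k i).

(* roots: alpha_{a,b}(diag t) = t_a / t_b, as characters of the diagonal torus *)
Definition root (a b : 'I_n) : M -> F := fun t => t a a / t b b.
Definition torus_elt (t : M) : Prop := is_diag_mx t /\ forall i, t i i != 0.
Definition winv_act (w : M) (alpha : M -> F) : M -> F :=
  fun t => alpha (w *m t *m invmx w).
Definition is_pos_root (beta : M -> F) : Prop :=
  exists a b : 'I_n, (a < b)%N /\ forall t, torus_elt t -> beta t = root a b t.
Definition is_neg_root (beta : M -> F) : Prop :=
  exists a b : 'I_n, (b < a)%N /\ forall t, torus_elt t -> beta t = root a b t.
Definition pairing (k : 'I_n -> int) (a b : 'I_n) : int := k a - k b.

Definition w_dominant (w : M) (k : 'I_n -> int) : Prop :=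
  forall i j : 'I_n, nat_of_ord j = i.+1 ->
    (is_pos_root (winv_act w (root i j)) -> 0 <= pairing k i j) /\
    (is_neg_root (winv_act w (root i j)) -> -1 <= pairing k i j).

Definition inWeyl (w : M) : Prop := exists s : 'S_n, w = perm_mx s.
End GroupDefs.

Section RepDefs.
Variables (F : fieldType) (v : F -> int) (n : nat) (R : realType).
Local Notation M := 'M[F]_n.
Local Notation C := R[i].
Local Notation Fn := (M -> C).

Definition rho (h : M) (f : Fn) : Fn := fun g => f (g *m h).

(* functions on G = GL_n(F): we work with functions on matrices vanishing off GL *)
Definition onG (f : Fn) : Prop := forall g, ~~ inGL g -> f g = 0.
Definition smooth (f : Fn) : Prop :=
  exists m : nat, (0 < m)%N /\ forall g k, inGL g -> inKm v m k -> f (g *m k) = f g.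

Definition subspace (S : Fn -> Prop) : Prop :=
  [/\ S (fun _ => 0), (forall f g, S f -> S g -> S (fun x => f x + g x))
    & forall (c : C) f, S f -> S (fun x => c * f x)].
Definition G_stable (S : Fn -> Prop) : Prop := forall h f, inGL h -> S f -> S (rho h f).
Definition irreducible_rep (S : Fn -> Prop) : Prop :=
  [/\ subspace S, G_stable S, (exists f, S f /\ exists g, f g != 0) &
      forall T : Fn -> Prop, subspace T -> G_stable T -> (forall f, T f -> S f) ->
        (forall f, T f -> forall g, f g = 0) \/ (forall f, S f -> T f)].

Definition absF (q : nat) (x : F) : R := if x == 0 then 0 else (q%:R : R) ^ (- v x).
Definition deltaB (q : nat) (b : M) : R :=
  \prod_(i < n) absF q (b i i) ^ (n%:Z + 1 - 2 * (i%:Z + 1)).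

Definition Ind (q : nat) (sigma : M -> C) : Fn -> Prop := fun f =>
  [/\ onG f, smooth f &
      forall b g, inB b -> inGL g -> f (b *m g) = ((Num.sqrt (deltaB q b))%:C%C * sigma b) * f g].

Definition irreducible_quotient_of (I S : Fn -> Prop) : Prop :=
  irreducible_rep S /\
  exists Phi : Fn -> Fn,
    [/\ (forall f, I f -> S (Phi f)), (forall f', S f' -> exists2 f, I f & Phi f = f'),
        (forall (c : C) f g, I f -> I g -> Phi (fun x => c * f x + g x) = (fun x => c * Phi f x + Phi g x))
      & (forall h f, inGL h -> I f -> Phi (rho h f) = rho h (Phi f))].

Definition psiN (psi : F -> C) (u : M) : C :=
  psi (\sum_(i < n) \sum_(j < n | nat_of_ord j == i.+1) u i j).

Definition whittaker_space (psi : F -> C) (S : Fn -> Prop) : Prop :=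
  forall W, S W -> onG W /\ forall u g, inN u -> inGL g -> W (u *m g) = psiN psi u * W g.
End RepDefs.

(* Main.v *)
Require Import Defs.
From HB Require Import structures.
From mathcomp Require Import all_boot all_order all_algebra all_fingroup.
From mathcomp Require Import reals complex.
Import Order.TTheory GRing.Theory Num.Theory.
Local Open Scope ring_scope.

Lemma key_id (F : fieldType) n (s : 'S_n) (r : 'I_n -> F) (i j : 'I_n) (c c' : F) :
  r i * c' = c * r j ->
  diag_mx (\row_x r x) *m perm_mx s *m (1%:M + c' *: delta_mx (s i) (s j)) =
  (1%:M + c *: delta_mx i j) *m (diag_mx (\row_x r x) *m perm_mx s).
Proof.
move=> Hr.
rewrite mulmxDr mulmx1 mulmxDl mul1mx; congr (_ + _).
rewrite -mulmxA -row_permE mulmxA.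
rewrite (_ : _ *m perm_mx s = col_perm s^-1 ((c *: delta_mx i j) *m diag_mx (\row_x r x))); last by rewrite col_permE invgK.
apply/matrixP => x y; rewrite mul_diag_mx mul_mx_diag !mxE.
have E1: (s x == s i) = (x == i) by rewrite (inj_eq perm_inj).
have E2: ((s^-1)%g y == j) = (y == s j) by apply/eqP/eqP => [<-|->]; rewrite ?permKV ?permK.
rewrite E1 E2; case: (x =P i) => [->|] /=; case: (y =P s j) => [->|] /=;
  rewrite ?permK ?mulr0 ?mul0r //.
by rewrite !mulr1 Hr.
Qed.

Lemma det_elem (F : fieldType) n (a b : 'I_n) (c : F) : a != b ->
  \det (1%:M + c *: delta_mx a b) = 1.
Proof.
have gen: forall (a b : 'I_n), (b < a)%N -> \det (1%:M + c *: delta_mx a b) = 1.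
  move=> a' b' ba; rewrite det_trig.
    apply: big1 => x _; rewrite !mxE eqxx /=.
    case: (x =P a') => [->|] /=; last by rewrite mulr0 addr0.
    by rewrite (_ : (a' == b') = false) ?mulr0 ?addr0 //; apply/negbTE; rewrite neq_ltn ba orbT.
  apply/is_trig_mxP => x y xy; rewrite !mxE.
  rewrite (_ : (x == y) = false); last by apply/negbTE; rewrite neq_ltn xy.
  case: (x =P a') => [ea|] /=; case: (y =P b') => [eb|] /=; rewrite ?mulr0 ?addr0 //.
  by move: xy ba; rewrite ea eb => /ltn_trans H /H; rewrite ltnn.
rewrite neq_ltn => /orP [ab|ba]; last exact: gen.
rewrite -det_tr linearD /= trmx1 linearZ /= trmx_delta; exact: gen.
Qed.

Section Val.
Variables (F : fieldType) (v : F -> int).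
Hypothesis vmul : forall x y : F, x != 0 -> y != 0 -> v (x * y) = v x + v y.

Lemma v1 : v 1 = 0.
Proof. have := @vmul 1 1 (oner_neq0 F) (oner_neq0 F); rewrite mulr1 => H.
by apply: (@addrI _ (v 1)); rewrite -H addr0. Qed.

Lemma vinv x : x != 0 -> v x^-1 = - v x.
Proof. move=> x0; have := @vmul x x^-1 x0 (invr_neq0 x0); rewrite mulfV // v1 => H; apply/eqP; by rewrite -subr_eq0 opprK addrC -H. Qed.

Lemma vexpn (p : F) m : p != 0 -> v (p ^+ m) = (v p) *+ m.
Proof. move=> p0; elim: m => [|m IH]; first by rewrite expr0 v1.
by rewrite exprS vmul ?expf_neq0 // IH mulrS. Qed.

Lemma vexpz (p : F) (m : int) : p != 0 -> v p = 1 -> v (p ^ m) = m.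
Proof. move=> p0 vp; case: m => m.
  by rewrite /exprz vexpn // vp natz.
by rewrite NegzE -exprnN vinv ?expf_neq0 // vexpn // vp natz. Qed.

Lemma inJ_elem n (a b : 'I_n) (c : F) : a != b -> inO v c -> ((b < a)%N -> inP v 1 c) ->
  inJ v (1%:M + c *: delta_mx a b).
Proof.
move=> ab cO cP.
have ent: forall x y, (1%:M + c *: delta_mx a b) x y =
   if (x == a) && (y == b) then c else if x == y then 1 else 0.
  move=> x y; rewrite !mxE.
  case: (x =P a) => [->|]; case: (y =P b) => [->|] /=; case: eqP => /= E; rewrite ?mulr1 ?mulr0 ?addr0 ?add0r //; try by rewrite E eqxx in ab.
have i1 : inO v (1 : F) by rewrite /inO /inP v1 lexx orbT.
have i0 : forall m, inP v m (0 : F) by move=> m; rewrite /inP eqxx.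
split; first split.
- by move=> x y; rewrite ent; case: ifP => _ //; case: ifP => _ //; apply: i0.
- by rewrite det_elem // oner_neq0 v1.
move=> x y yx; rewrite ent; case: ifP => [/andP [/eqP ea /eqP eb]|_].
  by apply: cP; rewrite -ea -eb.
by rewrite (_ : (x == y) = false) //; apply/negbTE; rewrite neq_ltn yx orbT.
Qed.
End Val.

Lemma perm_invmx (F : fieldType) n (s : 'S_n) : invmx (perm_mx s) = perm_mx (s^-1)%g :> 'M[F]_n.
Proof.
by rewrite -[RHS]mul1mx -(mulVmx (unitmx_perm _ s)) -mulmxA -perm_mxM mulgV perm_mx1 mulmx1.
Qed.

Lemma notpos (F : fieldType) (v : F -> int) (pi : F) n (s : 'S_n) (i j : 'I_n)
  (vmul : forall x y : F, x != 0 -> y != 0 -> v (x * y) = v x + v y) :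
  pi != 0 -> v pi = 1 -> (s j < s i)%N -> ~ is_pos_root (winv_act (perm_mx s : 'M[F]_n) (Defs.root i j)).
Proof.
move=> pi0 vpi sji [a [b [ab H]]].
pose t : 'M[F]_n := diag_mx (\row_x pi ^+ x).
have tt : torus_elt t.
  split; first exact: diag_mx_is_diag.
  by move=> x; rewrite /t !mxE eqxx mulr1n expf_neq0.
have := H t tt; rewrite /winv_act /Defs.root perm_invmx -row_permE -col_permE.
rewrite /t !mxE !eqxx !mulr1n.
have vq : forall x y : nat, v (pi ^+ x / pi ^+ y) = x%:Z - y%:Z.
  move=> x y; by rewrite vmul ?invr_neq0 ?expf_neq0 // vinv ?expf_neq0 // !vexpn // vpi !natz.
move=> /(congr1 v); rewrite !vq => E.
have h1 : (0 < (s i)%:Z - (s j)%:Z) by rewrite subr_gt0 ltz_nat.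
have h2 : ((a : nat)%:Z - (b : nat)%:Z < 0) by rewrite subr_lt0 ltz_nat.
by move: h1; rewrite E ltNge (ltW h2).
Qed.

From Stdlib Require Import Classical.
From mathcomp Require Import zify.

Theorem mainTheorem7
  (F : fieldType) (v : F -> int) (varpi : F) (q : nat)
  (HF : nonarch_local_field v varpi q)
  (n : nat) (R : realType)
  (tau : F -> R[i])
  (Htau_mul : forall x y : F, x != 0 -> y != 0 -> tau (x * y) = tau x * tau y)
  (Htau_ne0 : forall x : F, x != 0 -> tau x != 0)
  (Htau_unram : forall x : F, x != 0 -> v x = 0 -> tau x = 1)
  (Htau_n : forall x : F, x != 0 -> tau x ^+ n = 1)
  (psi : F -> R[i])
  (Hpsi_add : forall x y : F, psi (x + y) = psi x * psi y)
  (Hpsi_O : forall x : F, inO v x -> psi x = 1)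
  (Hpsi_nontriv : exists x : F, inP v (-1) x /\ psi x != 1)
  (S : ('M[F]_n -> R[i]) -> Prop)
  (HSwh : whittaker_space psi S)
  (HSst : irreducible_quotient_of
            (Ind v q (fun b : 'M[F]_n =>
               tau (\det b) * ((Num.sqrt (deltaB v R q b))%:C%C)^-1)) S)
  (W : 'M[F]_n -> R[i]) (HW : S W)
  (HWJ : forall g j : 'M[F]_n, inGL g -> inJ v j -> W (g *m j) = W g)
  (k : 'I_n -> int) (w : 'M[F]_n) (Hw : inWeyl w) :
  ~ w_dominant w k -> W (varpi_diag varpi k *m w) = 0.
Proof.
move=> Hnd.
case: HF => vmul _ [pi0 vpi] _ _.
case: Hw => s Ew; subst w.
have [x0 [x0P psix0]] := Hpsi_nontriv.
have x00 : x0 != 0.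
  by apply: contraNneq psix0 => ->; apply/eqP; apply: Hpsi_O; rewrite /inO /inP eqxx.
have vx0 : -1 <= v x0 by move: x0P; rewrite /inP (negbTE x00).
have gl : inGL (varpi_diag varpi k *m perm_mx s).
  rewrite /inGL unitmx_mul unitmx_perm andbT unitmxE det_diag unitfE.
  by apply/prodf_neq0 => x _; rewrite !mxE expfz_neq0.
have key : forall i j : 'I_n, nat_of_ord j = i.+1 ->
    inJ v (1%:M + (x0 * varpi ^ (k j - k i)) *: delta_mx (s i) (s j)) ->
    W (varpi_diag varpi k *m perm_mx s) = 0.
  move=> i j ji HJ.
  have ij : (i < j)%N by rewrite ji.
  have e1 := HWJ _ _ gl HJ.
  have e2 := @key_id F n s (fun x => varpi ^ k x) i j x0 (x0 * varpi ^ (k j - k i)).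
  rewrite /varpi_diag in e1 *.
  rewrite e2 in e1; last first.
    by rewrite mulrCA -expfzDr // addrC subrK mulrC.
  have [_ Hwh] := HSwh W HW.
  rewrite Hwh // in e1; last first.
    split.
      move=> x y yx; rewrite !mxE.
      rewrite (_ : (x == y) = false); last by apply/negbTE; rewrite neq_ltn yx orbT.
      case: (x =P i) => [ex|]; case: (y =P j) => [ey|] /=; rewrite ?mulr0 ?addr0 //.
      by move: yx ij; rewrite ex ey => /ltn_trans H /H; rewrite ltnn.
    move=> x; rewrite !mxE eqxx.
    case: (x =P i) => [ex|] /=; last by rewrite mulr0 addr0.
    rewrite (_ : (x == j) = false) ?mulr0 ?addr0 //.
    by apply/negbTE; rewrite ex neq_ltn ij.
  have hpsi : psiN psi (1%:M + x0 *: delta_mx i j) = psi x0.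
    rewrite /psiN; congr psi.
    rewrite (bigD1 i) //= [X in _ + X]big1 ?addr0; last first.
      move=> i' ne; apply: big1 => j' /eqP ej; rewrite !mxE.
      rewrite (negbTE ne) /= (_ : (i' == j') = false) ?mulr0 ?addr0 //.
      by apply/negbTE; rewrite -(inj_eq val_inj) /= ej neq_ltn ltnSn.
    rewrite (bigD1 j) /=; last by rewrite ji.
    rewrite big1 ?addr0; last first.
      move=> j' /andP [/eqP ej ne]; rewrite !mxE (negbTE ne) andbF mulr0 addr0.
      by rewrite (_ : (i == j') = false) //; apply/negbTE; rewrite -(inj_eq val_inj) /= ej neq_ltn ltnSn.
    by rewrite !mxE !eqxx mulr1 (_ : (i == j) = false) ?add0r //; apply/negbTE; rewrite -(inj_eq val_inj) /= neq_ltn ij.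
  rewrite hpsi in e1.
  have : (1 - psi x0) * W (diag_mx (\row_i0 varpi ^ k i0) *m perm_mx s) = 0.
    by rewrite mulrBl mul1r {1}e1 subrr.
  move/eqP; rewrite mulf_eq0 subr_eq0 eq_sym (negbTE psix0) /=.
  by move/eqP.
have vc : forall i j : 'I_n, v (x0 * varpi ^ (k j - k i)) = v x0 + (k j - k i).
  by move=> i j; rewrite vmul ?expfz_neq0 // (@vexpz _ _ vmul).
have c0 : forall i j : 'I_n, (x0 * varpi ^ (k j - k i)) != 0.
  by move=> i j; rewrite mulf_neq0 ?expfz_neq0.
apply: NNPP => Wne0; apply: Hnd => i j ji.
have ij : (i < j)%N by rewrite ji.
have sij : s i != s j.
  by rewrite (inj_eq perm_inj) -(inj_eq val_inj) /= neq_ltn ij.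
rewrite /pairing.
case: (ltngtP (s i) (s j)) => [slt|sgt|seq].
- have p0 : 0 <= k i - k j.
    rewrite leNgt; apply/negP => lt; apply: Wne0; apply: (key i j ji).
    apply: inJ_elem => //.
      by rewrite /inO /inP (negbTE (c0 i j)) vc; move: lt vx0; lia.
    by move=> /ltn_trans /(_ slt); rewrite ltnn.
  split=> _ //; apply: le_trans p0; by [].
- split.
    by move=> /(@notpos _ _ _ _ _ _ _ vmul pi0 vpi sgt).
  move=> _; rewrite leNgt; apply/negP => lt; apply: Wne0; apply: (key i j ji).
  apply: inJ_elem => //.
    by rewrite /inO /inP (negbTE (c0 i j)) vc; move: lt vx0; lia.
  by move=> _; rewrite /inP (negbTE (c0 i j)) vc; move: lt vx0; lia.
- by move: sij; rewrite -(inj_eq val_inj) /= seq eqxx.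
Qed.
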